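(* Let $D=\{\vec\gamma\in\mathbb{R}^3:\gamma_3\neq0\}$ and $\vec\mu(\vec M,\vec\gamma)=\big(0,0,\frac{\vec M\cdot\vec\gamma}{\gamma_3}\big)$ on $\mathbb{R}^3\times D$. Then $\Pi_{\vec\mu}$ defines a Poisson bracket on $\mathbb{R}^3\times D$ and $C(\vec M,\vec\gamma)=\gamma_3\,(\vec M\cdot\vec\gamma)$ is a Casimir function of $\Pi_{\vec\mu}$.
   Context: Coordinates on $\mathbb{R}^6$ are $(\vec M,\vec\gamma)=(M_1,M_2,M_3,\gamma_1,\gamma_2,\gamma_3)$. For a smooth $\vec\mu=(\mu_1,\mu_2,\mu_3)$ of $(\vec M,\vec\gamma)$, $\Pi_{\vec\mu}$ is the skew-symmetric $6\times6$ matrix $$\Pi_{\vec\mu}=\begin{bmatrix}0&-M_3-\mu_3&M_2+\mu_2&0&-\gamma_3&\gamma_2\\ M_3+\mu_3&0&-M_1-\mu_1&\gamma_3&0&-\gamma_1\\ -M_2-\mu_2&M_1+\mu_1&0&-\gamma_2&\gamma_1&0\\ 0&-\gamma_3&\gamma_2&0&0&0\\ \gamma_3&0&-\gamma_1&0&0&0\\ -\gamma_2&\gamma_1&0&0&0&0\end{bmatrix},$$ it ''defines a Poisson bracket'' if $\{f,g\}_{\vec\mu}=(\nabla f)^T\Pi_{\vec\mu}\nabla g$ satisfies the Jacobi identity, and a Casimir function is a smooth $C$ with $\Pi_{\vec\mu}\nabla C=0$. *)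

(* Defs.v *)
From Stdlib Require Import Reals Lra ClassicalEpsilon.
Open Scope R_scope.

Record pt6 : Type := P6 { M1 : R; M2 : R; M3 : R; g1 : R; g2 : R; g3 : R }.

Definition coord (i : nat) (x : pt6) : R :=
  match i with
  | 0 => M1 x | 1 => M2 x | 2 => M3 x
  | 3 => g1 x | 4 => g2 x | _ => g3 x
  end.

Definition upd (i : nat) (t : R) (x : pt6) : pt6 :=
  match i with
  | 0 => P6 t (M2 x) (M3 x) (g1 x) (g2 x) (g3 x)
  | 1 => P6 (M1 x) t (M3 x) (g1 x) (g2 x) (g3 x)
  | 2 => P6 (M1 x) (M2 x) t (g1 x) (g2 x) (g3 x)
  | 3 => P6 (M1 x) (M2 x) (M3 x) t (g2 x) (g3 x)
  | 4 => P6 (M1 x) (M2 x) (M3 x) (g1 x) t (g3 x)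
  | _ => P6 (M1 x) (M2 x) (M3 x) (g1 x) (g2 x) t
  end.

(* l1 distance on R^6 (induces the usual topology) *)
Definition dist6 (x y : pt6) : R :=
  Rabs (M1 x - M1 y) + Rabs (M2 x - M2 y) + Rabs (M3 x - M3 y)
  + Rabs (g1 x - g1 y) + Rabs (g2 x - g2 y) + Rabs (g3 x - g3 y).

Definition open6 (U : pt6 -> Prop) : Prop :=
  forall x, U x -> exists d, 0 < d /\ forall y, dist6 y x < d -> U y.

Definition continuous_on6 (U : pt6 -> Prop) (f : pt6 -> R) : Prop :=
  forall x, U x -> forall eps, 0 < eps ->
    exists d, 0 < d /\ forall y, U y -> dist6 y x < d -> Rabs (f y - f x) < eps.

Definition has_partial (i : nat) (f : pt6 -> R) (x : pt6) (l : R) : Prop :=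
  derivable_pt_lim (fun t => f (upd i t x)) (coord i x) l.

Fixpoint Ck (k : nat) (U : pt6 -> Prop) (f : pt6 -> R) : Prop :=
  match k with
  | O => continuous_on6 U f
  | S k' => continuous_on6 U f /\
      forall i, (i < 6)%nat -> exists g : pt6 -> R,
        (forall x, U x -> has_partial i f x (g x)) /\ Ck k' U g
  end.

Definition smooth_on (U : pt6 -> Prop) (f : pt6 -> R) : Prop :=
  forall k, Ck k U f.

(* The i-th partial derivative of f at x (chosen; meaningful where it exists). *)
Definition pd (i : nat) (f : pt6 -> R) (x : pt6) : R :=
  epsilon (inhabits 0) (fun l => has_partial i f x l).

Definition PiMat (mu1 mu2 mu3 : pt6 -> R) (x : pt6) (i j : nat) : R :=
  let m1 := M1 x + mu1 x in let m2 := M2 x + mu2 x in let m3 := M3 x + mu3 x in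
  match i, j with
  | 0, 1 => - m3 | 0, 2 => m2 | 0, 4 => - g3 x | 0, 5 => g2 x
  | 1, 0 => m3 | 1, 2 => - m1 | 1, 3 => g3 x | 1, 5 => - g1 x
  | 2, 0 => - m2 | 2, 1 => m1 | 2, 3 => - g2 x | 2, 4 => g1 x
  | 3, 1 => - g3 x | 3, 2 => g2 x
  | 4, 0 => g3 x | 4, 2 => - g1 x
  | 5, 0 => - g2 x | 5, 1 => g1 x
  | _, _ => 0
  end.

Definition bracket (mu1 mu2 mu3 : pt6 -> R) (f g : pt6 -> R) (x : pt6) : R :=
  sum_f_R0 (fun i => sum_f_R0 (fun j =>
     pd i f x * PiMat mu1 mu2 mu3 x i j * pd j g x) 5) 5.

Definition defines_Poisson_on (U : pt6 -> Prop) (mu1 mu2 mu3 : pt6 -> R) : Prop :=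
  forall f g h : pt6 -> R, smooth_on U f -> smooth_on U g -> smooth_on U h ->
  forall x, U x ->
    bracket mu1 mu2 mu3 f (bracket mu1 mu2 mu3 g h) x
  + bracket mu1 mu2 mu3 g (bracket mu1 mu2 mu3 h f) x
  + bracket mu1 mu2 mu3 h (bracket mu1 mu2 mu3 f g) x = 0.

Definition Casimir_on (U : pt6 -> Prop) (mu1 mu2 mu3 : pt6 -> R) (C : pt6 -> R) : Prop :=
  smooth_on U C /\
  forall x, U x -> forall i, (i < 6)%nat ->
    sum_f_R0 (fun j => PiMat mu1 mu2 mu3 x i j * pd j C x) 5 = 0.

Definition D13 (x : pt6) : Prop := g3 x <> 0.
Definition Mdotg (x : pt6) : R := M1 x * g1 x + M2 x * g2 x + M3 x * g3 x.
Definition mu13_1 (x : pt6) : R := 0.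
Definition mu13_2 (x : pt6) : R := 0.
Definition mu13_3 (x : pt6) : R := Mdotg x / g3 x.
Definition C13 (x : pt6) : R := g3 x * Mdotg x.

(* Main.v *)
Require Import Defs.
From Stdlib Require Import Reals.
Open Scope R_scope.
From Stdlib Require Import Lra Lia ClassicalEpsilon.

Ltac dest6 i := destruct i as [|[|[|[|[|[|i]]]]]]; try lia.

Lemma coord_upd_same i t x : coord i (upd i t x) = t.
Proof. destruct i as [|[|[|[|[|i]]]]]; reflexivity. Qed.

Lemma upd_coord i x : upd i (coord i x) x = x.
Proof. destruct x; destruct i as [|[|[|[|[|i]]]]]; reflexivity. Qed.

Lemma upd_upd_same i t s x : upd i t (upd i s x) = upd i t x.
Proof. destruct x; destruct i as [|[|[|[|[|i]]]]]; reflexivity. Qed.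

Lemma coord_upd_other i j t x : (i<6)%nat -> (j<6)%nat -> i<>j -> coord j (upd i t x) = coord j x.
Proof. intros; dest6 i; dest6 j; reflexivity. Qed.

Lemma upd_comm i j s t x : (i<6)%nat -> (j<6)%nat -> i<>j -> upd i s (upd j t x) = upd j t (upd i s x).
Proof. intros; destruct x; dest6 i; dest6 j; reflexivity. Qed.

Lemma dist_upd i t y : (i<6)%nat -> dist6 (upd i t y) y = Rabs (t - coord i y).
Proof.
  intros; destruct y; unfold dist6; dest6 i; simpl;
  rewrite ?Rminus_diag, ?Rabs_R0; ring.
Qed.

Lemma abs_tri a b c : Rabs (a - c) <= Rabs (a - b) + Rabs (b - c).
Proof. replace (a - c) with ((a - b) + (b - c)) by ring. apply Rabs_triang. Qed.

Lemma dist_tri a b c : dist6 a c <= dist6 a b + dist6 b c.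
Proof.
  unfold dist6.
  pose proof (abs_tri (M1 a) (M1 b) (M1 c)). pose proof (abs_tri (M2 a) (M2 b) (M2 c)).
  pose proof (abs_tri (M3 a) (M3 b) (M3 c)). pose proof (abs_tri (g1 a) (g1 b) (g1 c)).
  pose proof (abs_tri (g2 a) (g2 b) (g2 c)). pose proof (abs_tri (g3 a) (g3 b) (g3 c)).
  lra.
Qed.

Lemma coord_le_dist k y x : (k<6)%nat -> Rabs (coord k y - coord k x) <= dist6 y x.
Proof.
  intros; unfold dist6.
  pose proof (Rabs_pos (M1 y - M1 x)). pose proof (Rabs_pos (M2 y - M2 x)).
  pose proof (Rabs_pos (M3 y - M3 x)). pose proof (Rabs_pos (g1 y - g1 x)).
  pose proof (Rabs_pos (g2 y - g2 x)). pose proof (Rabs_pos (g3 y - g3 x)).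
  dest6 k; simpl; lra.
Qed.

Lemma open_D13 : open6 D13.
Proof.
  intros x Hx. exists (Rabs (g3 x)). split. apply Rabs_pos_lt; auto.
  intros y Hy Heq. unfold D13 in *.
  pose proof (coord_le_dist 5 y x ltac:(lia)). simpl in H. rewrite Heq in H.
  rewrite Rminus_0_l, Rabs_Ropp in H. lra.
Qed.
Definition dl (j k : nat) : R := if Nat.eqb j k then 1 else 0.

Lemma dpl_ext f g x l : (forall t, f t = g t) -> derivable_pt_lim f x l -> derivable_pt_lim g x l.
Proof.
  intros E H eps He. destruct (H eps He) as [d Hd]. exists d. intros h H1 H2.
  rewrite <- !E. apply Hd; auto.
Qed.

Lemma dpl_loc f g x l d : 0 < d -> (forall t, Rabs (t - x) < d -> f t = g t) ->
  derivable_pt_lim f x l -> derivable_pt_lim g x l.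
Proof.
  intros Hd E H eps He. destruct (H eps He) as [d1 Hd1].
  assert (Hm: 0 < Rmin d d1) by (apply Rmin_pos; [lra| apply cond_pos]).
  exists (mkposreal _ Hm). intros h H1 H2. simpl in H2.
  rewrite <- (E (x+h)), <- (E x). apply Hd1; auto. apply Rlt_le_trans with (1:=H2); apply Rmin_r.
  replace (x - x) with 0 by ring. rewrite Rabs_R0; auto.
  replace (x + h - x) with h by ring. apply Rlt_le_trans with (1:=H2); apply Rmin_l.
Qed.

Lemma hp_ext j f x l l' : has_partial j f x l -> l = l' -> has_partial j f x l'.
Proof. intros H ->; auto. Qed.

Lemma hp_plus j f g x l1 l2 : has_partial j f x l1 -> has_partial j g x l2 ->
  has_partial j (fun y => f y + g y) x (l1 + l2).
Proof. intros H1 H2. exact (derivable_pt_lim_plus _ _ _ _ _ H1 H2). Qed.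

Lemma hp_opp j f x l : has_partial j f x l -> has_partial j (fun y => - f y) x (- l).
Proof. intros H1. exact (derivable_pt_lim_opp _ _ _ H1). Qed.

Lemma hp_mult j f g x l1 l2 : has_partial j f x l1 -> has_partial j g x l2 ->
  has_partial j (fun y => f y * g y) x (l1 * g x + f x * l2).
Proof.
  intros H1 H2. pose proof (derivable_pt_lim_mult _ _ _ _ _ H1 H2) as H.
  unfold has_partial. simpl in H. rewrite upd_coord in H. exact H.
Qed.

Lemma hp_const j c x : has_partial j (fun _ => c) x 0.
Proof. exact (derivable_pt_lim_const c _). Qed.

Lemma hp_coord j k x : (j<6)%nat -> (k<6)%nat -> has_partial j (coord k) x (dl j k).
Proof.
  intros; unfold has_partial, dl; dest6 j; dest6 k; simpl;
  first [ exact (derivable_pt_lim_id _) | exact (derivable_pt_lim_const _ _) ].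
Qed.

Lemma hp_inv3 j x : (j<6)%nat -> g3 x <> 0 ->
  has_partial j (fun y => / g3 y) x (- dl j 5 * (/ g3 x * / g3 x)).
Proof.
  intros Hj Hx.
  pose proof (derivable_pt_lim_div (fun _ => 1) (fun t => g3 (upd j t x)) (coord j x) 0 (dl j 5)
     (derivable_pt_lim_const _ _) (hp_coord j 5 x Hj ltac:(lia))) as H.
  simpl in H. change (g3 (upd j (coord j x) x)) with (coord 5 (upd j (coord j x) x)) in H.
  rewrite upd_coord in H. simpl in H. specialize (H Hx).
  unfold has_partial.
  replace (- dl j 5 * (/ g3 x * / g3 x)) with ((0 * g3 x - dl j 5 * 1) / (g3 x)²)
    by (unfold Rsqr; field; auto).
  eapply dpl_ext. 2: exact H. intros t; unfold div_fct; cbv beta. unfold Rdiv; ring.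
Qed.

Lemma hp_sum j (F : nat -> pt6 -> R) (L : nat -> R) x n :
  (forall i, (i <= n)%nat -> has_partial j (F i) x (L i)) ->
  has_partial j (fun y => sum_f_R0 (fun i => F i y) n) x (sum_f_R0 L n).
Proof.
  induction n; intros H; simpl. apply H; lia.
  apply hp_plus. apply IHn; intros; apply H; lia. apply H; lia.
Qed.

Lemma pd_eq j f x l : has_partial j f x l -> pd j f x = l.
Proof.
  intros H. unfold pd. assert (Hs := epsilon_spec (inhabits 0) (fun l => has_partial j f x l) (ex_intro _ l H)).
  exact (uniqueness_limite _ _ _ _ Hs H).
Qed.

Lemma hp_line i f c y l : has_partial i f (upd i c y) l -> derivable_pt_lim (fun t => f (upd i t y)) c l.
Proof.
  unfold has_partial. rewrite coord_upd_same. apply dpl_ext. intros; rewrite upd_upd_same; auto.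
Qed.

Lemma hp_local (U : pt6 -> Prop) j f g x l d : (j<6)%nat -> 0 < d -> (forall y, dist6 y x < d -> U y) ->
  (forall y, U y -> f y = g y) -> has_partial j f x l -> has_partial j g x l.
Proof.
  intros Hj Hd HU E H. unfold has_partial. eapply dpl_loc with (d:=d); auto.
  intros t Ht. apply E, HU. rewrite dist_upd; auto. exact H.
Qed.

Lemma mixed (U : pt6 -> Prop) f gi gij i j x s t d :
  (i<6)%nat -> (j<6)%nat -> i<>j -> 0<s -> 0<t -> s+t<d ->
  (forall y, dist6 y x < d -> U y) ->
  (forall y, U y -> has_partial i f y (gi y)) -> (forall y, U y -> has_partial j gi y (gij y)) ->
  exists q, dist6 q x < s + t /\
   f (upd i (coord i x + s) (upd j (coord j x + t) x)) - f (upd i (coord i x + s) x)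
   - f (upd j (coord j x + t) x) + f x = s * t * gij q.
Proof.
  intros Hi Hj Hij Hs Ht Hd HU Hf Hg.
  set (a := coord i x). set (b := coord j x).
  assert (Din: forall u v, a <= u <= a + s -> b <= v <= b + t ->
     dist6 (upd j v (upd i u x)) x <= (v - b) + (u - a)).
  { intros u v Hu Hv. eapply Rle_trans. apply dist_tri with (b := upd i u x).
    rewrite !dist_upd; auto. rewrite coord_upd_other; auto.
    fold b a. rewrite !Rabs_right; lra. }
  assert (Din2: forall u v, a <= u <= a + s -> b <= v <= b + t -> U (upd j v (upd i u x))).
  { intros u v Hu Hv. apply HU. specialize (Din u v Hu Hv). lra. }
  destruct (MVT_cor2 (fun u => f (upd i u (upd j (b+t) x)) - f (upd i u x))
     (fun u => gi (upd i u (upd j (b+t) x)) - gi (upd i u x)) a (a+s)) as [sg [Hsg Hsgb]]. lra.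
  { intros c Hc. apply derivable_pt_lim_minus; apply hp_line; apply Hf.
    rewrite upd_comm; auto. apply Din2; lra.
    rewrite <- (upd_coord j (upd i c x)). rewrite coord_upd_other; auto. apply Din2; fold b; lra. }
  destruct (MVT_cor2 (fun v => gi (upd j v (upd i sg x)))
     (fun v => gij (upd j v (upd i sg x))) b (b+t)) as [tg [Htg Htgb]]. lra.
  { intros c Hc. apply hp_line; apply Hg. apply Din2; lra. }
  exists (upd j tg (upd i sg x)). split.
  { specialize (Din sg tg ltac:(lra) ltac:(lra)). lra. }
  cbv beta in Hsg, Htg.
  rewrite (upd_comm i j) in Hsg; auto.
  rewrite (upd_comm i j (a+s)) by auto.
  assert (E1: upd i a (upd j (b + t) x) = upd j (b+t) x).
  { unfold a. rewrite <- (coord_upd_other j i (b+t) x) by auto. apply upd_coord. }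
  assert (E2: upd i a x = x) by apply upd_coord.
  assert (E3: upd j b (upd i sg x) = upd i sg x).
  { unfold b. rewrite <- (coord_upd_other i j sg x) by auto. apply upd_coord. }
  rewrite E1, E2 in Hsg. rewrite E3 in Htg.
  replace (f (upd j (b + t) (upd i (a + s) x)) - f (upd i (a + s) x) - f (upd j (b + t) x) + f x)
   with ((f (upd j (b + t) (upd i (a + s) x)) - f (upd i (a + s) x)) - (f (upd j (b + t) x) - f x)) by ring.
  rewrite Hsg. rewrite (upd_comm i j sg) by auto. rewrite Htg. ring.
Qed.

Lemma Ck2_data (U : pt6 -> Prop) f i : Ck 2 U f -> (i<6)%nat -> exists gi,
  (forall y, U y -> has_partial i f y (gi y)) /\ continuous_on6 U gi /\
  forall j, (j<6)%nat -> exists gij, (forall y, U y -> has_partial j gi y (gij y)) /\ continuous_on6 U gij.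
Proof.
  intros [_ H] Hi. destruct (H i Hi) as [gi [H1 [H2 H3]]]. exists gi; split; auto.
Qed.

Lemma L1 (U : pt6 -> Prop) f i x : Ck 2 U f -> (i<6)%nat -> U x -> has_partial i f x (pd i f x).
Proof.
  intros H Hi Hx. destruct (Ck2_data U f i H Hi) as [gi [H1 _]].
  rewrite (pd_eq _ _ _ _ (H1 x Hx)). auto.
Qed.

Lemma L2_val (U : pt6 -> Prop) f i j x gi gij : open6 U -> U x -> (i<6)%nat -> (j<6)%nat ->
  (forall y, U y -> has_partial i f y (gi y)) -> (forall y, U y -> has_partial j gi y (gij y)) ->
  has_partial j (pd i f) x (gij x).
Proof.
  intros HO Hx Hi Hj H1 H2. destruct (HO x Hx) as [d [Hd HU]].
  apply (hp_local U j gi (pd i f) x _ d Hj Hd HU); auto.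
  intros y Hy. symmetry. apply pd_eq; auto.
Qed.

Lemma L2 (U : pt6 -> Prop) f i j x : open6 U -> Ck 2 U f -> U x -> (i<6)%nat -> (j<6)%nat ->
  has_partial j (pd i f) x (pd j (pd i f) x).
Proof.
  intros HO H Hx Hi Hj. destruct (Ck2_data U f i H Hi) as [gi [H1 [_ H3]]].
  destruct (H3 j Hj) as [gij [H4 _]].
  pose proof (L2_val U f i j x gi gij HO Hx Hi Hj H1 H4) as K.
  rewrite (pd_eq _ _ _ _ K). auto.
Qed.

Lemma eq_of_small a b : (forall eps, 0 < eps -> Rabs (a - b) < 2 * eps) -> a = b.
Proof.
  intros H. destruct (Req_dec a b) as [|Hn]; auto.
  assert (0 < Rabs (a - b)) by (apply Rabs_pos_lt; lra).
  specialize (H (Rabs (a - b) / 4) ltac:(lra)). lra.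
Qed.

Lemma clairaut (U : pt6 -> Prop) f i j x : open6 U -> Ck 2 U f -> U x -> (i<6)%nat -> (j<6)%nat ->
  pd j (pd i f) x = pd i (pd j f) x.
Proof.
  intros HO H Hx Hi Hj. destruct (Nat.eq_dec i j) as [->|Hij]; auto.
  destruct (Ck2_data U f i H Hi) as [gi [Hgi [_ H3]]].
  destruct (H3 j Hj) as [gij [Hgij Cij]].
  destruct (Ck2_data U f j H Hj) as [gj [Hgj [_ H3']]].
  destruct (H3' i Hi) as [gji [Hgji Cji]].
  rewrite (pd_eq _ _ _ _ (L2_val U f i j x gi gij HO Hx Hi Hj Hgi Hgij)).
  rewrite (pd_eq _ _ _ _ (L2_val U f j i x gj gji HO Hx Hj Hi Hgj Hgji)).
  destruct (HO x Hx) as [d [Hd HU]].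
  apply eq_of_small. intros eps He.
  destruct (Cij x Hx eps He) as [d1 [Hd1 K1]].
  destruct (Cji x Hx eps He) as [d2 [Hd2 K2]].
  set (s := Rmin d (Rmin d1 d2) / 3).
  assert (Hm : 0 < Rmin d (Rmin d1 d2)) by (repeat apply Rmin_pos; auto).
  assert (Hs0 : 0 < s) by (unfold s; lra).
  assert (Hsd : s + s < Rmin d (Rmin d1 d2)) by (unfold s; lra).
  pose proof (Rmin_l d (Rmin d1 d2)). pose proof (Rmin_r d (Rmin d1 d2)).
  pose proof (Rmin_l d1 d2). pose proof (Rmin_r d1 d2).
  destruct (mixed U f gi gij i j x s s d Hi Hj Hij Hs0 Hs0 ltac:(lra) HU Hgi Hgij) as [q1 [Hq1 E1]].
  destruct (mixed U f gj gji j i x s s d Hj Hi (not_eq_sym Hij) Hs0 Hs0 ltac:(lra) HU Hgj Hgji) as [q2 [Hq2 E2]].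
  rewrite (upd_comm j i) in E2 by auto.
  assert (E : gij q1 = gji q2).
  { apply Rmult_eq_reg_l with (s * s). rewrite <- E1, <- E2. ring.
    assert (0 < s * s) by (apply Rmult_lt_0_compat; auto). lra. }
  assert (A1 : Rabs (gij q1 - gij x) < eps) by (apply K1; [apply HU|]; lra).
  assert (A2 : Rabs (gji q2 - gji x) < eps) by (apply K2; [apply HU|]; lra).
  pose proof (abs_tri (gij x) (gij q1) (gji x)) as T. rewrite E in T, A1.
  rewrite Rabs_minus_sym in A1. lra.
Qed.

Definition dMd j x := (dl j 0 * g1 x + M1 x * dl j 3) + (dl j 1 * g2 x + M2 x * dl j 4)
   + (dl j 2 * g3 x + M3 x * dl j 5).
Definition dmu3 j x := dMd j x * / g3 x + Mdotg x * (- dl j 5 * (/ g3 x * / g3 x)).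

Definition dPi (j : nat) (x : pt6) (i k : nat) : R :=
  let m1 := dl j 0 in let m2 := dl j 1 in let m3 := dl j 2 + dmu3 j x in
  match i, k with
  | 0, 1 => - m3 | 0, 2 => m2 | 0, 4 => - dl j 5 | 0, 5 => dl j 4
  | 1, 0 => m3 | 1, 2 => - m1 | 1, 3 => dl j 5 | 1, 5 => - dl j 3
  | 2, 0 => - m2 | 2, 1 => m1 | 2, 3 => - dl j 4 | 2, 4 => dl j 3
  | 3, 1 => - dl j 5 | 3, 2 => dl j 4
  | 4, 0 => dl j 5 | 4, 2 => - dl j 3
  | 5, 0 => - dl j 4 | 5, 1 => dl j 3
  | _, _ => 0
  end.

Definition Pi := PiMat mu13_1 mu13_2 mu13_3.

Ltac hp_solve := repeat first
  [ apply hp_plus | apply hp_opp | apply hp_mult | apply hp_const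
  | apply hp_inv3; [lia | assumption]
  | apply (hp_coord _ 0); lia | apply (hp_coord _ 1); lia | apply (hp_coord _ 2); lia
  | apply (hp_coord _ 3); lia | apply (hp_coord _ 4); lia | apply (hp_coord _ 5); lia ].

Lemma hp_Pi j x k l : (j<6)%nat -> g3 x <> 0 ->
  has_partial j (fun y => Pi y k l) x (dPi j x k l).
Proof.
  intros Hj Hx. unfold Pi, PiMat, mu13_1, mu13_2, mu13_3, Mdotg, Rdiv.
  destruct k as [|[|[|[|[|[|k]]]]]]; destruct l as [|[|[|[|[|[|l]]]]]];
  simpl; eapply hp_ext; try (hp_solve; fail);
  try (unfold dPi, dmu3, dMd, Mdotg; simpl; ring).
Qed.

Definition DB g h j x := sum_f_R0 (fun k => sum_f_R0 (fun l =>
  (pd j (pd k g) x * Pi x k l + pd k g x * dPi j x k l) * pd l h x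
  + pd k g x * Pi x k l * pd j (pd l h) x) 5) 5.

Lemma hp_bracket g h j x : Ck 2 D13 g -> Ck 2 D13 h -> D13 x -> (j<6)%nat ->
  has_partial j (bracket mu13_1 mu13_2 mu13_3 g h) x (DB g h j x).
Proof.
  intros Hg Hh Hx Hj. unfold bracket, DB.
  apply hp_sum; intros k Hk; apply hp_sum; intros l Hl.
  eapply hp_ext. apply hp_mult. apply hp_mult.
  apply (L2 D13); auto; try lia; apply open_D13.
  apply hp_Pi; auto.
  apply (L2 D13); auto; try lia; apply open_D13.
  unfold Pi; ring.
Qed.

Lemma bracket_outer f B V x : D13 x -> (forall j, (j<6)%nat -> has_partial j B x (V j)) ->
  bracket mu13_1 mu13_2 mu13_3 f B x =
  sum_f_R0 (fun i => sum_f_R0 (fun j => pd i f x * Pi x i j * V j) 5) 5.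
Proof.
  intros Hx H. unfold bracket. apply sum_eq; intros i Hi; apply sum_eq; intros j Hj.
  rewrite (pd_eq _ _ _ _ (H j ltac:(lia))). reflexivity.
Qed.

Ltac clair1 f x Hf Hx a b := rewrite (clairaut D13 f a b x open_D13 Hf Hx ltac:(lia) ltac:(lia)).
Ltac clair f x Hf Hx :=
  clair1 f x Hf Hx 0%nat 1%nat; clair1 f x Hf Hx 0%nat 2%nat; clair1 f x Hf Hx 0%nat 3%nat; clair1 f x Hf Hx 0%nat 4%nat; clair1 f x Hf Hx 0%nat 5%nat; clair1 f x Hf Hx 1%nat 2%nat; clair1 f x Hf Hx 1%nat 3%nat; clair1 f x Hf Hx 1%nat 4%nat; clair1 f x Hf Hx 1%nat 5%nat; clair1 f x Hf Hx 2%nat 3%nat; clair1 f x Hf Hx 2%nat 4%nat; clair1 f x Hf Hx 2%nat 5%nat; clair1 f x Hf Hx 3%nat 4%nat; clair1 f x Hf Hx 3%nat 5%nat; clair1 f x Hf Hx 4%nat 5%nat.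

Lemma jacobi f g h x : Ck 2 D13 f -> Ck 2 D13 g -> Ck 2 D13 h -> D13 x ->
    bracket mu13_1 mu13_2 mu13_3 f (bracket mu13_1 mu13_2 mu13_3 g h) x
  + bracket mu13_1 mu13_2 mu13_3 g (bracket mu13_1 mu13_2 mu13_3 h f) x
  + bracket mu13_1 mu13_2 mu13_3 h (bracket mu13_1 mu13_2 mu13_3 f g) x = 0.
Proof.
  intros Hf Hg Hh Hx.
  rewrite (bracket_outer f _ (fun j => DB g h j x) x Hx (fun j Hj => hp_bracket g h j x Hg Hh Hx Hj)).
  rewrite (bracket_outer g _ (fun j => DB h f j x) x Hx (fun j Hj => hp_bracket h f j x Hh Hf Hx Hj)).
  rewrite (bracket_outer h _ (fun j => DB f g j x) x Hx (fun j Hj => hp_bracket f g j x Hf Hg Hx Hj)).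
  unfold DB, Pi, PiMat, dPi, dmu3, dMd, mu13_1, mu13_2, mu13_3, Mdotg, dl; simpl.
  clair f x Hf Hx; clair g x Hg Hx; clair h x Hh Hx.
  generalize (/ g3 x). intros u.
  ring.
Qed.

Inductive isPoly : (pt6 -> R) -> Prop :=
| ip_const c : isPoly (fun _ => c)
| ip_coord k : (k<6)%nat -> isPoly (coord k)
| ip_add f g : isPoly f -> isPoly g -> isPoly (fun y => f y + g y)
| ip_mul f g : isPoly f -> isPoly g -> isPoly (fun y => f y * g y).

Lemma poly_deriv f : isPoly f -> forall j, (j<6)%nat -> exists g, isPoly g /\ forall x, has_partial j f x (g x).
Proof.
  induction 1; intros j Hj.
  - exists (fun _ => 0). split. constructor. intros; apply hp_const.
  - exists (fun _ => dl j k). split. constructor. intros; apply hp_coord; auto.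
  - destruct (IHisPoly1 j Hj) as [a [Ha Ka]]. destruct (IHisPoly2 j Hj) as [b [Hb Kb]].
    exists (fun y => a y + b y). split. constructor; auto. intros; apply hp_plus; auto.
  - destruct (IHisPoly1 j Hj) as [a [Ha Ka]]. destruct (IHisPoly2 j Hj) as [b [Hb Kb]].
    exists (fun y => a y * g y + f y * b y). split. repeat constructor; auto.
    intros; apply hp_mult; auto.
Qed.

Lemma cont_mul_pt (a b a0 b0 eps : R) : 0 < eps ->
  Rabs (a - a0) < eps / (2 * (Rabs b0 + 1)) ->
  Rabs (b - b0) < Rmin 1 (eps / (2 * (Rabs a0 + 1))) ->
  Rabs (a * b - a0 * b0) < eps.
Proof.
  intros He Ha Hb.
  pose proof (Rabs_pos a0) as P0. pose proof (Rabs_pos b0) as P1.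
  pose proof (Rmin_l 1 (eps / (2 * (Rabs a0 + 1)))) as R1.
  pose proof (Rmin_r 1 (eps / (2 * (Rabs a0 + 1)))) as R2.
  replace (a * b - a0 * b0) with ((a - a0) * b + a0 * (b - b0)) by ring.
  eapply Rle_lt_trans. apply Rabs_triang. rewrite !Rabs_mult.
  assert (Hb1 : Rabs b <= Rabs b0 + 1).
  { pose proof (abs_tri b b0 0). rewrite !Rminus_0_r in H. lra. }
  assert (E1 : Rabs (a - a0) * Rabs b <= eps / (2 * (Rabs b0 + 1)) * (Rabs b0 + 1)).
  { apply Rmult_le_compat; try apply Rabs_pos; lra. }
  assert (E2 : Rabs a0 * Rabs (b - b0) <= (Rabs a0 + 1) * (eps / (2 * (Rabs a0 + 1)))).
  { apply Rmult_le_compat; try apply Rabs_pos; lra. }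
  assert (E3 : Rabs a0 * Rabs (b - b0) < (Rabs a0 + 1) * (eps / (2 * (Rabs a0 + 1)))).
  { destruct (Req_dec (Rabs a0) 0) as [Z|Z]. rewrite Z. rewrite Rmult_0_l.
    apply Rmult_lt_0_compat. lra. apply Rdiv_lt_0_compat; lra.
    apply Rle_lt_trans with (Rabs a0 * (eps / (2 * (Rabs a0 + 1)))).
    apply Rmult_le_compat_l; try lra. apply Rmult_lt_compat_r. apply Rdiv_lt_0_compat; lra. lra. }
  replace (eps / (2 * (Rabs b0 + 1)) * (Rabs b0 + 1)) with (eps / 2) in E1 by (field; lra).
  replace ((Rabs a0 + 1) * (eps / (2 * (Rabs a0 + 1)))) with (eps / 2) in E3 by (field; lra).
  lra.
Qed.

Lemma poly_cont (U : pt6 -> Prop) f : isPoly f -> continuous_on6 U f.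
Proof.
  induction 1; intros x Hx eps He.
  - exists 1; split; [lra|]. intros. rewrite Rminus_diag, Rabs_R0; auto.
  - exists eps; split; auto. intros y Hy Hd. eapply Rle_lt_trans. apply coord_le_dist; auto. auto.
  - destruct (IHisPoly1 x Hx (eps/2) ltac:(lra)) as [d1 [Hd1 K1]].
    destruct (IHisPoly2 x Hx (eps/2) ltac:(lra)) as [d2 [Hd2 K2]].
    exists (Rmin d1 d2); split. apply Rmin_pos; auto.
    intros y Hy Hd. pose proof (Rmin_l d1 d2); pose proof (Rmin_r d1 d2).
    replace (f y + g y - (f x + g x)) with ((f y - f x) + (g y - g x)) by ring.
    eapply Rle_lt_trans. apply Rabs_triang.
    pose proof (K1 y Hy ltac:(lra)). pose proof (K2 y Hy ltac:(lra)). lra.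
  - assert (e1 : 0 < eps / (2 * (Rabs (g x) + 1))).
    { apply Rdiv_lt_0_compat; auto. pose proof (Rabs_pos (g x)); lra. }
    assert (e2 : 0 < Rmin 1 (eps / (2 * (Rabs (f x) + 1)))).
    { apply Rmin_pos. lra. apply Rdiv_lt_0_compat; auto. pose proof (Rabs_pos (f x)); lra. }
    destruct (IHisPoly1 x Hx _ e1) as [d1 [Hd1 K1]].
    destruct (IHisPoly2 x Hx _ e2) as [d2 [Hd2 K2]].
    exists (Rmin d1 d2); split. apply Rmin_pos; auto.
    intros y Hy Hd. pose proof (Rmin_l d1 d2); pose proof (Rmin_r d1 d2).
    apply cont_mul_pt; auto. apply K1; auto; lra. apply K2; auto; lra.
Qed.

Lemma poly_Ck (U : pt6 -> Prop) k : forall f, isPoly f -> Ck k U f.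
Proof.
  induction k; intros f Hf; simpl. apply poly_cont; auto.
  split. apply poly_cont; auto.
  intros i Hi. destruct (poly_deriv f Hf i Hi) as [g [Hg K]]. exists g. split; auto.
Qed.

Lemma C13_poly : isPoly C13.
Proof.
  unfold C13, Mdotg.
  apply ip_mul. exact (ip_coord 5 ltac:(lia)).
  apply ip_add. apply ip_add.
  apply ip_mul; [exact (ip_coord 0 ltac:(lia)) | exact (ip_coord 3 ltac:(lia))].
  apply ip_mul; [exact (ip_coord 1 ltac:(lia)) | exact (ip_coord 4 ltac:(lia))].
  apply ip_mul; [exact (ip_coord 2 ltac:(lia)) | exact (ip_coord 5 ltac:(lia))].
Qed.

Definition dC j x := dl j 5 * Mdotg x + g3 x * dMd j x.

Lemma hp_C13 j x : (j<6)%nat -> has_partial j C13 x (dC j x).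
Proof.
  intros Hj. unfold C13, Mdotg. eapply hp_ext. hp_solve. unfold dC, dMd, Mdotg. ring.
Qed.

Lemma casimir : Casimir_on D13 mu13_1 mu13_2 mu13_3 C13.
Proof.
  split. intros k. apply poly_Ck, C13_poly.
  intros x Hx i Hi.
  rewrite (sum_eq _ (fun j => PiMat mu13_1 mu13_2 mu13_3 x i j * dC j x)).
  2:{ intros j Hj. rewrite (pd_eq _ _ _ _ (hp_C13 j x ltac:(lia))). reflexivity. }
  unfold D13 in Hx.
  dest6 i; unfold PiMat, dC, dMd, mu13_1, mu13_2, mu13_3, Mdotg, dl; simpl; field; auto.
Qed.

Theorem mainTheorem13 :
  defines_Poisson_on D13 mu13_1 mu13_2 mu13_3 /\
  Casimir_on D13 mu13_1 mu13_2 mu13_3 C13.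
Proof.
  split.
  - intros f g h Hf Hg Hh x Hx. apply jacobi; auto.
  - exact casimir.
Qed.
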